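(* Let $A=(A_1,A_2)\in\mathbb{N}_0^2$, $u_0\in\mathbb{R}\setminus\{0\}$, $l$ an even natural number, and let $p,\bar p$ be real polynomials in $(x,y)$ with $p(x,y)=(y^{A_1}-u_0x^{A_2})^l\,\bar p(x,y)$ and $\bar p(0,0)=0$. Then $(0,0)$ is a point of local minimum of $p$ if and only if it is a point of local minimum of $\bar p$.
   Context: $\mathbb{N}=\{1,2,\dots\}$; $\mathbb{N}_0^2$ is the set of $(A_1,A_2)\in\mathbb{N}^2$ with $\gcd(A_1,A_2)=1$. A point of local minimum of $f$ at $(0,0)$ means $f(x,y)\ge f(0,0)$ for all $(x,y)$ in some neighborhood of $(0,0)$. *)

(* Defs.v *)
From HB Require Import structures.
From mathcomp Require Import all_boot all_order all_algebra.
From mathcomp Require Import reals.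
Set Implicit Arguments. Unset Strict Implicit. Unset Printing Implicit Defensive.
Import Order.TTheory GRing.Theory Num.Theory.
Local Open Scope ring_scope.

(* Real bivariate polynomials in (x,y) are represented as {poly {poly R}}:
   the outer variable is y, the inner variable (coefficients) is x. *)

Definition eval2 (R : realType) (P : {poly {poly R}}) (x y : R) : R :=
  (P.[y%:P]).[x].

Definition polyx (R : realType) : {poly {poly R}} := ('X)%:P.
Definition polyy (R : realType) : {poly {poly R}} := 'X.

(* (0,0) is a point of local minimum of f: f(x,y) >= f(0,0) on a
   neighbourhood of (0,0) (square neighbourhoods form a basis). *)
Definition local_min_at_origin (R : realType) (f : R -> R -> R) : Prop :=
  exists e : R, 0 < e /\
    forall x y : R, `|x| < e -> `|y| < e -> f 0 0 <= f x y.

(* Main.v *)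
Require Import Defs.
From HB Require Import structures.
From mathcomp Require Import all_boot all_order all_algebra.
From mathcomp Require Import reals.
From mathcomp Require Import boolp classical_sets topology normedtype derive.
From mathcomp Require Import lra.
Import Order.TTheory GRing.Theory Num.Theory.
Import numFieldNormedType.Exports.
Local Open Scope ring_scope.

Lemma key (R : realType) (f : {poly R}) (c e : R) (n l : nat) :
  (0 < n)%N -> ~~ odd l ->
  (forall y : R, `|y| < e -> 0 <= f.[y] * (y ^+ n - c) ^+ l) ->
  forall y : R, `|y| < e -> 0 <= f.[y].
Proof.
move=> n0 ev H y0 hy0; rewrite leNgt; apply/negP => fneg.
have hc := @continuous_horner R f y0.
have := cvgr_lt _ hc _ fneg.
move=> /(_ (nbhs_filter _)) /nbhs_ballP[d d0 hd].
set t := Num.min d (e - `|y0|) / 2.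
have t0 : 0 < t by rewrite divr_gt0 // lt_min d0 subr_gt0.
have td : t < d.
  apply: (@lt_le_trans _ _ (Num.min d (e - `|y0|))); last by rewrite ge_min lexx.
  by rewrite /t ltr_pdivrMr // ltr_pMr ?ltr1n // lt_min d0 subr_gt0.
have te : t < e - `|y0|.
  apply: (@lt_le_trans _ _ (Num.min d (e - `|y0|))); last by rewrite ge_min lexx orbT.
  by rewrite /t ltr_pdivrMr // ltr_pMr ?ltr1n // lt_min d0 subr_gt0.
pose s : R := if 0 <= y0 then 1 else -1.
have pt : forall u, 0 < u -> u <= t ->
    `|y0 + s * u| = `|y0| + u /\ `|y0 + s * u| < e /\ f.[y0 + s * u] < 0.
  move=> u u0 ut.
  have E : `|y0 + s * u| = `|y0| + u.
    rewrite /s; case: ifP => hy.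
      by rewrite mul1r ger0_norm ?ger0_norm // addr_ge0 // ltW.
    move/negbT: hy; rewrite -ltNge => hy.
    rewrite mulN1r ler0_norm ?ltr0_norm //; first by rewrite opprB addrC.
    by rewrite subr_le0 (le_trans (ltW hy)) // ltW.
  split => //; split; first by rewrite E -ltrBrDl (le_lt_trans ut).
  apply: hd; rewrite /ball /= opprD addNKr normrN normrM.
  rewrite /s; case: ifP => _; rewrite ?normrN normr1 mul1r gtr0_norm //; exact: le_lt_trans td.
have [E1 [L1 F1]] := pt t t0 (lexx _).
have t20 : 0 < t / 2 by rewrite divr_gt0.
have t2t : t / 2 <= t by rewrite ler_pdivrMr // ler_pMr // ler1n.
have [E2 [L2 F2]] := pt (t / 2) t20 t2t.
  have [gz1|gz1] := eqVneq ((y0 + s * t) ^+ n - c) 0.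
    have [gz2|gz2] := eqVneq ((y0 + s * (t / 2)) ^+ n - c) 0.
      move: gz1; rewrite -gz2 => /eqP; rewrite subr_eq addrNK => /eqP /(congr1 Num.norm).
      rewrite !normrX => /eqP; rewrite eqrXn2 // E1 E2 => /eqP /addrI => htt.
      lra.
    have := H _ L2; rewrite pmulr_lge0; last by rewrite exprn_even_gt0 // gz2 orbT.
    by rewrite leNgt F2.
  have := H _ L1; rewrite pmulr_lge0; last by rewrite exprn_even_gt0 // gz1 orbT.
  by rewrite leNgt F1.
Qed.


Lemma eval2M (R : realType) (P Q : {poly {poly R}}) x y :
  eval2 (P * Q) x y = eval2 P x y * eval2 Q x y.
Proof. by rewrite /eval2 !hornerM. Qed.

Lemma eval2_q (R : realType) (A1 A2 l : nat) (u0 : R) x y :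
  eval2 ((polyy R ^+ A1 - u0%:P%:P * polyx R ^+ A2) ^+ l) x y
  = (y ^+ A1 - u0 * x ^+ A2) ^+ l.
Proof.
rewrite /eval2 /polyy /polyx !(horner_exp, hornerD, hornerN, hornerM, hornerX, hornerC).
by [].
Qed.

Lemma eval2_map (R : realType) (P : {poly {poly R}}) x y :
  eval2 P x y = (map_poly (horner_eval x) P).[y].
Proof.
have -> : y = horner_eval x y%:P by rewrite /horner_eval hornerC.
by rewrite horner_map /eval2 /horner_eval hornerC.
Qed.

Theorem mainTheorem14 (R : realType) (A1 A2 : nat) (u0 : R) (l : nat)
    (p pbar : {poly {poly R}}) :
  (0 < A1)%N -> (0 < A2)%N -> coprime A1 A2 ->
  u0 != 0 ->
  (0 < l)%N -> ~~ odd l ->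
  p = (polyy R ^+ A1 - u0%:P%:P * polyx R ^+ A2) ^+ l * pbar ->
  eval2 pbar 0 0 = 0 ->
  (local_min_at_origin (eval2 p) <-> local_min_at_origin (eval2 pbar)).
Proof.
move=> hA1 _ _ _ _ ev -> h0.
have Ep : forall x y, eval2 ((polyy R ^+ A1 - u0%:P%:P * polyx R ^+ A2) ^+ l * pbar) x y
    = (y ^+ A1 - u0 * x ^+ A2) ^+ l * eval2 pbar x y.
  by move=> x y; rewrite eval2M eval2_q.
split => -[e [e0 he]]; exists e; split => // x y hx hy.
- rewrite h0; move: (he x) => {}he.
  rewrite eval2_map; apply: (@key R _ (u0 * x ^+ A2) e A1 l) => // z hz.
  rewrite -eval2_map mulrC -Ep; move: (he z hx hz); by rewrite Ep h0 mulr0.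
- rewrite !Ep h0 mulr0; apply: mulr_ge0; first exact: exprn_even_ge0.
  by rewrite -h0; apply: he.
Qed.
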